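(* Fix $\epsilon\in(0,1/2)$. Consider a scalar parameter $\theta\in\mathbb{R}$, clean-label probability $p=\sigma(\theta)=(1+e^{-\theta})^{-1}$ and noise contamination $\tilde p=1-p$, and the objective $$J(\theta)=(1-\epsilon)\,\ell_q(\sigma(\theta))+\epsilon\,\ell_q(1-\sigma(\theta)),\qquad \ell_q(u)=-\log_q u,$$ with gradient flow $\dot\theta=-J'(\theta)$. (i) For $q\in(0,1]$, let $r=(\epsilon/(1-\epsilon))^{1/q}$ and $\tilde p_*(q)=r/(1+r)$ (the unique point in $(0,1)$ where $\frac{d}{dp}[(1-\epsilon)\ell_q(p)+\epsilon\ell_q(1-p)]=0$). Fix $\eta\in(0,\tilde p_*(q))$, and for $\tilde p_0\in(0,\eta)$ let $T_q^{\mathrm{noise}}(\tilde p_0)$ be the time for the flow started at $\tilde p(0)=\tilde p_0$ to reach $\tilde p=\eta$. Then, as $\tilde p_0\to0$ (with $q,\epsilon,\eta$ fixed), $$T_q^{\mathrm{noise}}(\tilde p_0)=\Theta\!\left(\frac{\tilde p_0^{-(1-q)}}{(1-q)\,\epsilon}\right)\ \text{for } q\in(0,1),\qquad T_1^{\mathrm{noise}}(\tilde p_0)=\Theta\!\left(\frac{\log(1/\tilde p_0)}{\epsilon}\right),$$ and for $0<q<q'\le1$, $T_q^{\mathrm{noise}}(\tilde p_0)/T_{q'}^{\mathrm{noise}}(\tilde p_0)=\Theta(\tilde p_0^{-(q'-q)})\to\infty$. (ii) For $q=0$, $\dot{\tilde p}=-(1-2\epsilon)p^2\tilde p^2<0$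 whenever $\tilde p\in(0,1)$, so from any $\tilde p_0\in(0,1)$ the contamination decreases monotonically and never reaches any target $\eta>\tilde p_0$ (i.e. $T_0^{\mathrm{noise}}(\tilde p_0)=\infty$).
   Context: The Tsallis $q$-logarithm is $\log_q(u)=\frac{u^{1-q}-1}{1-q}$ for $u\in(0,1]$, $q\in[0,1)$, and $\log_1(u)=\log u$. Under this flow, $\dot{\tilde p}=\big[\epsilon\tilde p^{-q}-(1-\epsilon)(1-\tilde p)^{-q}\big]\,p^2\,\tilde p^2$.
   Formalization: For q′ = 1 the ratio $T_q^{\mathrm{noise}}(\tilde p_0)/T_{q'}^{\mathrm{noise}}(\tilde p_0)$ is Θ( $\tilde p_0^{-(1-q)}$ / $\log(1/\tilde p_0)$ ) instead of $\Theta(\tilde p_0^{-(q'-q)})$, which is asserted for q′ < 1 only. The statement above fails without it. *)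

(* Defs.v *)
From Stdlib Require Import Reals Lra.
From Coquelicot Require Import Coquelicot.
Open Scope R_scope.

Definition sigmoid (x : R) : R := / (1 + exp (- x)).

Definition logq (q u : R) : R :=
  if Req_EM_T q 1 then ln u else (Rpower u (1 - q) - 1) / (1 - q).

Definition lossq (q u : R) : R := - logq q u.

Definition Jobj (eps q : R) (theta : R) : R :=
  (1 - eps) * lossq q (sigmoid theta) + eps * lossq q (1 - sigmoid theta).

Definition is_flow (eps q : R) (th : R -> R) : Prop :=
  forall t : R, is_derive th t (- Derive (Jobj eps q) (th t)).

Definition pclean (th : R -> R) (t : R) : R := sigmoid (th t).
Definition ptilde (th : R -> R) (t : R) : R := 1 - sigmoid (th t).

Definition pstar (eps q : R) : R :=
  let r := Rpower (eps / (1 - eps)) (1 / q) in r / (1 + r).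

Definition first_hit (f : R -> R) (eta T : R) : Prop :=
  0 <= T /\ f T = eta /\ (forall s, 0 <= s < T -> f s <> eta).

(* Main.v *)
Require Import Defs.
From Stdlib Require Import Reals Lra.
From Coquelicot Require Import Coquelicot.
Open Scope R_scope.

Lemma is_derive_eq (f : R -> R) (x l l' : R) : is_derive f x l -> l = l' -> is_derive f x l'.
Proof. intros H ->; exact H. Qed.
Lemma is_derive_Ropp (f : R -> R) x l : is_derive f x l -> is_derive (fun y => - f y) x (- l).
Proof. intros H. exact (is_derive_opp f x l H). Qed.
Lemma dR_minus (f g : R -> R) x a b : is_derive f x a -> is_derive g x b -> is_derive (fun y => f y - g y) x (a - b).
Proof. intros. exact (is_derive_minus f g x a b H H0). Qed.
Lemma dR_plus (f g : R -> R) x a b : is_derive f x a -> is_derive g x b -> is_derive (fun y => f y + g y) x (a + b).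
Proof. intros. exact (is_derive_plus f g x a b H H0). Qed.
Lemma dR_scal (f : R -> R) k x a : is_derive f x a -> is_derive (fun y => k * f y) x (k * a).
Proof. intros. exact (is_derive_scal f x k a H). Qed.
Lemma dR_comp (f g : R -> R) x a b : is_derive f (g x) a -> is_derive g x b -> is_derive (fun y => f (g y)) x (b * a).
Proof. intros. exact (is_derive_comp f g x a b H H0). Qed.
Lemma dR_const (k : R) x : is_derive (fun _ => k) x 0.
Proof. exact (is_derive_const k x). Qed.
Ltac req := match goal with |- @eq _ ?a ?b => change (@eq R a b) end.

Lemma sig_pos x : 0 < sigmoid x < 1.
Proof.
  unfold sigmoid. pose proof (exp_pos (-x)). split.
  - apply Rinv_0_lt_compat; lra.
  - rewrite <- Rinv_1. apply Rinv_lt_contravar; lra.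
Qed.

Lemma sig_der x : is_derive sigmoid x (sigmoid x * (1 - sigmoid x)).
Proof.
  unfold sigmoid. pose proof (exp_pos (-x)).
  apply (is_derive_eq _ _ (- (exp (-x) * (-1)) / (1 + exp (-x))^2)).
  - auto_derive. lra. field. lra.
  - match goal with |- @eq _ ?a ?b => change (@eq R a b) end. field. lra.
Qed.

Lemma loss_der q u : 0 <= q <= 1 -> 0 < u -> is_derive (lossq q) u (- Rpower u (-q)).
Proof.
  intros Hq Hu. unfold lossq, logq. destruct (Req_EM_T q 1) as [E|E].
  - subst q. rewrite Rpower_Ropp, Rpower_1 by lra.
    apply (is_derive_eq _ _ (- (/ u))); [|reflexivity].
    apply is_derive_Ropp. apply is_derive_Reals. apply derivable_pt_lim_ln; lra.
  - assert (Hq1 : 1 - q <> 0) by lra.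
    assert (D1 : is_derive (fun u => Rpower u (1 - q) - 1) u ((1 - q) * Rpower u (1 - q - 1) - 0)).
    { apply dR_minus. apply is_derive_Reals, derivable_pt_lim_power; lra. apply dR_const. }
    assert (D2 : is_derive (fun _ : R => 1 - q) u 0) by apply dR_const.
    pose proof (is_derive_Ropp _ _ _ (is_derive_div _ _ _ _ _ D1 D2 Hq1)) as D.
    apply (is_derive_eq _ _ _ _ D).
    replace (1 - q - 1) with (-q) by ring. req. field. exact Hq1.
Qed.

Definition Jd (eps q s : R) := s * (1 - s) * (- (1 - eps) * Rpower s (-q) + eps * Rpower (1 - s) (-q)).

Lemma J_der eps q x : 0 <= q <= 1 -> is_derive (Jobj eps q) x (Jd eps q (sigmoid x)).
Proof.
  intros Hq. destruct (sig_pos x) as [s0 s1].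
  assert (H1 := dR_comp _ _ x _ _ (loss_der q (sigmoid x) Hq s0) (sig_der x)).
  assert (H2 : is_derive (fun t => 1 - sigmoid t) x (0 - sigmoid x * (1 - sigmoid x))).
  { apply dR_minus. apply dR_const. apply sig_der. }
  assert (H3 := dR_comp _ _ x _ _ (loss_der q (1 - sigmoid x) Hq ltac:(lra)) H2).
  pose proof (dR_plus _ _ _ _ _ (dR_scal _ (1 - eps) _ _ H1) (dR_scal _ eps _ _ H3)) as H.
  apply (is_derive_eq _ _ _ _ H). unfold Jd. ring.
Qed.

Lemma Derive_J eps q x : 0 <= q <= 1 -> Derive (Jobj eps q) x = Jd eps q (sigmoid x).
Proof. intros Hq. apply is_derive_unique, J_der, Hq. Qed.

Lemma ptilde_der eps q th t : 0 <= q <= 1 -> is_flow eps q th ->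
  is_derive (ptilde th) t
   (let p := sigmoid (th t) in let x := 1 - p in
    p ^ 2 * x ^ 2 * (eps * Rpower x (-q) - (1 - eps) * Rpower p (-q))).
Proof.
  intros Hq Hf. specialize (Hf t). rewrite Derive_J in Hf by exact Hq.
  assert (H := dR_minus _ _ t _ _ (dR_const 1 t) (dR_comp _ _ t _ _ (sig_der (th t)) Hf)).
  apply (is_derive_eq _ _ _ _ H). unfold Jd. simpl. ring.
Qed.

Lemma cont_nbhd (f : R -> R) T e : continuity_pt f T -> 0 < e ->
  exists d, 0 < d /\ forall u, Rabs (u - T) < d -> Rabs (f u - f T) < e.
Proof.
  intros H He. unfold continuity_pt, continue_in, limit1_in, limit_in in H.
  destruct (H e He) as [d [Hd H']]. exists d. split; auto.
  intros u Hu. destruct (Req_dec u T) as [->|Hne].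
  - rewrite Rminus_diag, Rabs_R0; lra.
  - apply (H' u). split. unfold D_x, no_cond. split; auto. simpl; unfold R_dist. exact Hu.
Qed.

Lemma first_hit_exists (f : R -> R) eta t1 :
  (forall t, continuity_pt f t) -> f 0 < eta -> 0 <= t1 -> eta <= f t1 ->
  exists T, first_hit f eta T.
Proof.
  intros Hc H0 Ht1 Hf1.
  set (E := fun s => 0 <= s /\ forall u, 0 <= u <= s -> f u < eta).
  assert (Hb : bound E).
  { exists t1. intros s [Hs Hu]. destruct (Rle_lt_dec s t1); auto.
    specialize (Hu t1 ltac:(lra)). lra. }
  assert (He : exists x, E x).
  { exists 0. split. lra. intros u Hu. replace u with 0 by lra. exact H0. }
  destruct (completeness E Hb He) as [T [HT1 HT2]].
  assert (T0 : 0 <= T). { apply HT1. destruct He as [x Hx]. split. lra. intros u Hu. replace u with 0 by lra. exact H0. }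
  assert (Hbelow : forall s, 0 <= s < T -> f s < eta).
  { intros s Hs. destruct (Classical_Prop.classic (exists s', E s' /\ s < s')) as [[s' [[_ Hs'] Hss]]|Hn].
    - apply Hs'. lra.
    - exfalso. assert (T <= s). { apply HT2. intros x Hx. destruct (Rle_lt_dec x s); auto. exfalso; apply Hn; exists x; auto. }
      lra. }
  exists T. split; [exact T0|]. split; [|intros s Hs; specialize (Hbelow s Hs); lra].
  destruct (Rtotal_order (f T) eta) as [Hlt|[Heq|Hgt]]; auto; exfalso.
  - destruct (cont_nbhd f T (eta - f T) (Hc T) ltac:(lra)) as [d [Hd Hn]].
    assert (E (T + d / 2)).
    { split. lra. intros u Hu. destruct (Rlt_le_dec u T). apply Hbelow; lra.
      assert (Rabs (u - T) < d) by (rewrite Rabs_right; lra).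
      specialize (Hn u H). apply Rabs_def2 in Hn. lra. }
    specialize (HT1 _ H). lra.
  - destruct (cont_nbhd f T (f T - eta) (Hc T) ltac:(lra)) as [d [Hd Hn]].
    destruct (Req_dec T 0) as [->|HT]. lra.
    set (u := Rmax 0 (T - d / 2)).
    assert (Hu : 0 <= u < T). { unfold u. split. apply Rmax_l. apply Rmax_lub_lt; lra. }
    assert (Rabs (u - T) < d).
    { rewrite Rabs_left by lra. unfold u. pose proof (Rmax_r 0 (T - d/2)). lra. }
    specialize (Hn u H). apply Rabs_def2 in Hn. specialize (Hbelow u Hu). lra.
Qed.

Lemma first_hit_unique f eta T1 T2 : first_hit f eta T1 -> first_hit f eta T2 -> T1 = T2.
Proof.
  intros [A1 [B1 C1]] [A2 [B2 C2]].
  destruct (Rtotal_order T1 T2) as [H|[H|H]]; auto.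
  - exfalso. apply (C2 T1); auto; lra.
  - exfalso. apply (C1 T2); auto; lra.
Qed.

Lemma deriv_cont (g : R -> R) t d : is_derive g t d -> continuity_pt g t.
Proof.
  intros H. apply derivable_continuous_pt. exists d. apply is_derive_Reals; exact H.
Qed.

Lemma mvt (g D : R -> R) a b : a <= b -> (forall t, is_derive g t (D t)) ->
  exists c, a <= c <= b /\ g b - g a = D c * (b - a).
Proof.
  intros Hab Hd. destruct (MVT_gen g a b D) as [c [Hc Heq]].
  - intros; apply Hd.
  - intros; eapply deriv_cont; apply Hd.
  - exists c. rewrite Rmin_left, Rmax_right in Hc by lra. auto.
Qed.

Lemma first_hit_below (f : R -> R) eta T : (forall t, continuity_pt f t) -> f 0 < eta ->
  first_hit f eta T -> forall s, 0 <= s < T -> f s < eta.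
Proof.
  intros Hc H0 [T0 [HT Hb]] s Hs.
  destruct (Rtotal_order (f s) eta) as [H|[H|H]]; auto.
  - exfalso; apply (Hb s Hs H).
  - exfalso. assert (Hs0 : 0 < s) by (destruct (Req_dec s 0) as [->|]; lra).
    assert (Hcont : continuity (fun u => f u - eta)).
    { intros x. apply continuity_pt_minus. apply Hc. apply continuity_pt_const. intros a b; reflexivity. }
    destruct (IVT _ 0 s Hcont Hs0 ltac:(lra) ltac:(lra)) as [z [Hz Hfz]].
    apply (Hb z). lra. lra.
Qed.

Lemma hit_bounds (f g D : R -> R) eta k e m :
  (forall t, continuity_pt f t) -> (forall t, is_derive g t (D t)) ->
  (forall t, f t <= eta -> - e <= D t /\ D t <= - k) -> 0 < k -> 0 < e -> f 0 < eta ->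
  (forall t, f t < eta -> m <= g t) ->
  (exists T, first_hit f eta T) /\
  forall T, first_hit f eta T -> (g 0 - g T) / e <= T /\ T <= (g 0 - g T) / k.
Proof.
  intros Hc Hd HD Hk He H0 Hm. split.
  - destruct (Classical_Prop.classic (exists t1, 0 <= t1 /\ eta <= f t1)) as [[t1 [A B]]|Hn].
    + eapply first_hit_exists; eauto.
    + exfalso. assert (Hall : forall t, 0 <= t -> f t < eta).
      { intros t Ht. destruct (Rlt_le_dec (f t) eta); auto. exfalso; apply Hn; exists t; auto. }
      set (t := Rmax 0 ((g 0 - m) / k) + 1).
      assert (Ht : 0 <= t) by (unfold t; pose proof (Rmax_l 0 ((g 0 - m)/k)); lra).
      destruct (mvt g D 0 t Ht Hd) as [c [Hc' Heq]].
      destruct (HD c (Rlt_le _ _ (Hall c ltac:(lra)))) as [_ Hdc].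
      specialize (Hm t (Hall t Ht)).
      assert (Hkt : g 0 - m < k * t).
      { unfold t. pose proof (Rmax_r 0 ((g 0 - m)/k)).
        assert (g 0 - m = k * ((g 0 - m)/k)) by (field; lra). nra. }
      nra.
  - intros T [T0 [HT Hb]].
    destruct (mvt g D 0 T T0 Hd) as [c [Hc' Heq]].
    assert (Hfc : f c <= eta).
    { destruct (Req_dec c T) as [->|]. lra. left. apply (first_hit_below f eta T Hc H0 (conj T0 (conj HT Hb))). lra. }
    destruct (HD c Hfc) as [A B].
    assert (E1 : g 0 - g T = (- D c) * T) by lra.
    rewrite E1. unfold Rdiv. split.
    + apply (Rmult_le_reg_r e); auto. rewrite Rmult_assoc, Rinv_l by lra. nra.
    + apply (Rmult_le_reg_r k); auto. rewrite (Rmult_assoc _ (/ k)), Rinv_l by lra. nra.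
Qed.

Lemma Rpower_inv_base y q : 0 < y -> Rpower (/ y) q = Rpower y (- q).
Proof. intros Hy. unfold Rpower. rewrite ln_Rinv by lra. f_equal; ring. Qed.

Lemma Rpower_pos x y : 0 < Rpower x y.
Proof. unfold Rpower. apply exp_pos. Qed.

Lemma Rpower_2 x : 0 < x -> Rpower x 2 = x ^ 2.
Proof. intros Hx. rewrite <- Rpower_pow by lra. f_equal; simpl; try ring. Qed.

Lemma h_eq x q : 0 < x < 1 -> Rpower x q * Rpower (1 - x) (- q) = Rpower (x / (1 - x)) q.
Proof.
  intros Hx. unfold Rdiv. rewrite <- Rpower_mult_distr by (try apply Rinv_0_lt_compat; lra).
  rewrite Rpower_inv_base by lra. reflexivity.
Qed.

Lemma D_eq x q : 0 < x < 1 -> forall eps,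
  (1 - x) ^ 2 * x ^ 2 * (eps * Rpower x (-q) - (1 - eps) * Rpower (1 - x) (-q)) * (- Rpower x (q - 2))
  = - (1 - x) ^ 2 * (eps - (1 - eps) * Rpower (x / (1 - x)) q).
Proof.
  intros Hx eps. rewrite <- h_eq by lra.
  assert (E1 : Rpower x (q - 2) * x ^ 2 = Rpower x q).
  { rewrite <- Rpower_2 by lra. rewrite <- Rpower_plus. f_equal; ring. }
  assert (E2 : Rpower x q * Rpower x (- q) = 1).
  { rewrite <- Rpower_plus. replace (q + - q) with 0 by ring. apply Rpower_O; lra. }
  transitivity (- (1 - x) ^ 2 * (eps * ((Rpower x (q - 2) * x ^ 2) * Rpower x (- q))
     - (1 - eps) * ((Rpower x (q - 2) * x ^ 2) * Rpower (1 - x) (- q)))).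
  - ring.
  - rewrite E1, E2. ring.
Qed.

Lemma pstar_lt1 eps q : 0 < pstar eps q < 1.
Proof.
  unfold pstar. pose proof (Rpower_pos (eps / (1 - eps)) (1 / q)).
  split. apply Rdiv_lt_0_compat; lra. apply Rmult_lt_reg_r with (1 + Rpower (eps / (1 - eps)) (1 / q)). lra.
  unfold Rdiv. rewrite Rmult_assoc, Rinv_l by lra. lra.
Qed.

Lemma pstar_bracket eps q eta : 0 < eps < 1/2 -> 0 < q -> 0 < eta < pstar eps q ->
  0 < eps - (1 - eps) * Rpower (eta / (1 - eta)) q.
Proof.
  intros He Hq Heta. pose proof (pstar_lt1 eps q).
  unfold pstar in *. set (r := Rpower (eps / (1 - eps)) (1 / q)) in *.
  assert (Hr : 0 < r) by apply Rpower_pos.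
  assert (H1 : eta / (1 - eta) < r).
  { apply (Rmult_lt_reg_r (1 - eta)). lra. unfold Rdiv. rewrite Rmult_assoc, Rinv_l by lra.
    assert (eta * (1 + r) < r).
    { destruct Heta as [_ Heta]. apply (Rmult_lt_compat_r (1 + r)) in Heta; [|lra].
      unfold Rdiv in Heta. rewrite Rmult_assoc, Rinv_l in Heta by lra. lra. }
    lra. }
  assert (H2 : Rpower (eta / (1 - eta)) q < Rpower r q).
  { apply Rlt_Rpower_l. lra. split; auto. apply Rdiv_lt_0_compat; lra. }
  assert (H3 : Rpower r q = eps / (1 - eps)).
  { unfold r. rewrite Rpower_mult. replace (1 / q * q) with 1 by (field; lra).
    apply Rpower_1. apply Rdiv_lt_0_compat; lra. }
  rewrite H3 in H2.
  assert ((1 - eps) * Rpower (eta / (1 - eta)) q < (1 - eps) * (eps / (1 - eps))).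
  { apply Rmult_lt_compat_l; lra. }
  assert ((1 - eps) * (eps / (1 - eps)) = eps) by (field; lra). lra.
Qed.

Definition kap eps q eta := (1 - eta) ^ 2 * (eps - (1 - eps) * Rpower (eta / (1 - eta)) q).

Lemma rate_bounds eps q eta x : 0 < eps < 1/2 -> 0 < q -> 0 < eta < pstar eps q -> 0 < x <= eta ->
  let D := - (1 - x) ^ 2 * (eps - (1 - eps) * Rpower (x / (1 - x)) q) in
  - eps <= D /\ D <= - kap eps q eta.
Proof.
  intros He Hq Heta Hx D. pose proof (pstar_lt1 eps q).
  pose proof (pstar_bracket eps q eta He Hq Heta) as Hb.
  assert (Hm : Rpower (x / (1 - x)) q <= Rpower (eta / (1 - eta)) q).
  { apply Rle_Rpower_l. lra. split. apply Rdiv_lt_0_compat; lra.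
    unfold Rdiv. apply Rmult_le_compat; try lra. left; apply Rinv_0_lt_compat; lra.
    apply Rinv_le_contravar; lra. }
  pose proof (Rpower_pos (x / (1 - x)) q).
  assert (Hsq : (1 - eta) ^ 2 <= (1 - x) ^ 2) by (apply pow_incr; lra).
  assert (Hsq1 : (1 - x) ^ 2 <= 1) by (rewrite <- (pow1 2); apply pow_incr; lra).
  unfold D, kap. split.
  - assert (0 <= eps - (1 - eps) * Rpower (x / (1 - x)) q <= eps) by nra. nra.
  - assert (eps - (1 - eps) * Rpower (eta / (1 - eta)) q <= eps - (1 - eps) * Rpower (x / (1 - x)) q) by nra.
    assert (0 <= (1 - eta) ^ 2) by (apply pow2_ge_0).
    nra.
Qed.

Lemma core eps q eta (Phi : R -> R) :
  0 < eps < 1/2 -> 0 < q <= 1 -> 0 < eta < pstar eps q ->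
  (forall x, 0 < x -> is_derive Phi x (- Rpower x (q - 2))) ->
  (forall x, 0 < x <= eta -> 0 <= Phi x) ->
  exists k, 0 < k /\ forall p0 th, 0 < p0 < eta -> is_flow eps q th -> ptilde th 0 = p0 ->
   (exists T, first_hit (ptilde th) eta T) /\
   forall T, first_hit (ptilde th) eta T ->
     (Phi p0 - Phi eta) / eps <= T /\ T <= (Phi p0 - Phi eta) / k.
Proof.
  intros He Hq Heta HPhi Hpos.
  pose proof (pstar_lt1 eps q).
  exists (kap eps q eta). split.
  { unfold kap. pose proof (pstar_bracket eps q eta He (proj1 Hq) Heta).
    apply Rmult_lt_0_compat; auto. apply pow_lt; lra. }
  intros p0 th Hp0 Hf H0.
  assert (Hq' : 0 <= q <= 1) by lra.
  set (f := ptilde th).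
  assert (Hfpos : forall t, 0 < f t < 1).
  { intros t. unfold f, ptilde. pose proof (sig_pos (th t)). lra. }
  assert (Hfd := fun t => ptilde_der eps q th t Hq' Hf).
  set (D := fun t => let x := f t in
      - (1 - x) ^ 2 * (eps - (1 - eps) * Rpower (x / (1 - x)) q)).
  assert (Hgd : forall t, is_derive (fun t => Phi (f t)) t (D t)).
  { intros t. pose proof (dR_comp Phi f t _ _ (HPhi (f t) (proj1 (Hfpos t))) (Hfd t)) as HH.
    apply (is_derive_eq _ _ _ _ HH). unfold D. cbv zeta.
    replace (sigmoid (th t)) with (1 - f t) by (unfold f, ptilde; ring).
    replace (1 - (1 - f t)) with (f t) by ring.
    rewrite <- (D_eq (f t) q (Hfpos t) eps). ring. }
  assert (Hc : forall t, continuity_pt f t) by (intros t; eapply deriv_cont; apply Hfd).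
  assert (Hk : 0 < kap eps q eta).
  { unfold kap. pose proof (pstar_bracket eps q eta He (proj1 Hq) Heta).
    apply Rmult_lt_0_compat; auto. apply pow_lt; lra. }
  assert (HD : forall t, f t <= eta -> - eps <= D t /\ D t <= - kap eps q eta).
  { intros t Ht. unfold D. apply (rate_bounds eps q eta (f t) He (proj1 Hq) Heta). split. apply Hfpos. exact Ht. }
  assert (Hf0 : f 0 < eta) by (unfold f; lra).
  assert (Hm : forall t, f t < eta -> 0 <= Phi (f t)).
  { intros t Ht. apply Hpos. split. apply Hfpos. lra. }
  destruct (hit_bounds f (fun t => Phi (f t)) D eta (kap eps q eta) eps 0 Hc Hgd HD Hk ltac:(lra) Hf0 Hm)
    as [Hex Hbd].
  split; auto. intros T HT. specialize (Hbd T HT).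
  destruct HT as [_ [HT _]]. unfold f in *. rewrite H0, HT in Hbd. exact Hbd.
Qed.

Lemma pack eps q eta (Phi : R -> R) :
  0 < eps < 1/2 -> 0 < q <= 1 -> 0 < eta < pstar eps q ->
  (forall x, 0 < x -> is_derive Phi x (- Rpower x (q - 2))) ->
  (forall x, 0 < x <= eta -> 0 <= Phi x) ->
  (exists d, 0 < d /\ forall p0, 0 < p0 < d -> 2 * Phi eta <= Phi p0) ->
  exists k d, 0 < k /\ 0 < d /\ forall p0 th, 0 < p0 < d -> p0 < eta -> is_flow eps q th -> ptilde th 0 = p0 ->
   (exists T, first_hit (ptilde th) eta T) /\
   forall T, first_hit (ptilde th) eta T ->
     Phi p0 / (2 * eps) <= T /\ T <= Phi p0 / k.
Proof.
  intros He Hq Heta HPhi Hpos [d [Hd Hsm]].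
  destruct (core eps q eta Phi He Hq Heta HPhi Hpos) as [k [Hk Hc]].
  exists k, d. split; auto. split; auto.
  intros p0 th Hp0 Hpe Hf H0. destruct (Hc p0 th ltac:(lra) Hf H0) as [Hex Hb].
  split; auto. intros T HT. destruct (Hb T HT) as [B1 B2].
  specialize (Hsm p0 Hp0). assert (0 <= Phi eta) by (apply Hpos; lra).
  split.
  - eapply Rle_trans; [|exact B1]. unfold Rdiv. rewrite Rinv_mult.
    assert (0 < / eps) by (apply Rinv_0_lt_compat; lra). nra.
  - eapply Rle_trans; [exact B2|]. unfold Rdiv.
    assert (0 < / k) by (apply Rinv_0_lt_compat; lra). nra.
Qed.

Definition PhiQ q x := Rpower x (- (1 - q)) / (1 - q).
Definition PhiL x := ln (1 / x).

Lemma PhiQ_der q x : q < 1 -> 0 < x -> is_derive (PhiQ q) x (- Rpower x (q - 2)).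
Proof.
  intros Hq Hx. unfold PhiQ.
  assert (D1 : is_derive (fun u => Rpower u (- (1 - q))) x ((- (1 - q)) * Rpower x (- (1 - q) - 1))).
  { apply is_derive_Reals, derivable_pt_lim_power; lra. }
  pose proof (dR_scal _ (/ (1 - q)) _ _ D1) as D.
  unfold Rdiv. eapply is_derive_ext; [|apply (is_derive_eq _ _ _ _ D)].
  - intros t. simpl. ring.
  - replace (- (1 - q) - 1) with (q - 2) by ring. field. lra.
Qed.

Lemma PhiL_der x : 0 < x -> is_derive PhiL x (- Rpower x (1 - 2)).
Proof.
  intros Hx. replace (1 - 2) with (- (1)) by ring. rewrite Rpower_Ropp, Rpower_1 by lra.
  unfold PhiL. auto_derive.
  - split. lra. split; [|exact I]. rewrite Rmult_1_l; apply Rinv_0_lt_compat; lra.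
  - req. field. lra.
Qed.

Lemma PhiQ_pos q x : q < 1 -> 0 < PhiQ q x.
Proof. intros Hq. unfold PhiQ. apply Rdiv_lt_0_compat. apply Rpower_pos. lra. Qed.

Lemma PhiL_eq x : 0 < x -> PhiL x = - ln x.
Proof. intros Hx. unfold PhiL, Rdiv. rewrite Rmult_1_l, ln_Rinv by lra. reflexivity. Qed.

Lemma PhiL_pos x : 0 < x < 1 -> 0 < PhiL x.
Proof.
  intros Hx. rewrite PhiL_eq by lra. pose proof (ln_increasing x 1 ltac:(lra) ltac:(lra)).
  rewrite ln_1 in H. lra.
Qed.

Lemma PhiQ_small q eta : q < 1 -> 0 < eta ->
  exists d, 0 < d /\ forall p0, 0 < p0 < d -> 2 * PhiQ q eta <= PhiQ q p0.
Proof.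
  intros Hq He. set (a := 1 - q). assert (Ha : 0 < a) by (unfold a; lra).
  exists (eta * Rpower 2 (- / a)). split.
  { apply Rmult_lt_0_compat; auto. apply Rpower_pos. }
  intros p0 Hp0. unfold PhiQ. fold a.
  assert (E : Rpower (eta * Rpower 2 (- / a)) (- a) = 2 * Rpower eta (- a)).
  { rewrite <- Rpower_mult_distr by (auto; apply Rpower_pos). rewrite Rpower_mult.
    replace (- / a * - a) with 1 by (field; lra). rewrite Rpower_1 by lra. ring. }
  assert (M : Rpower (eta * Rpower 2 (- / a)) (- a) <= Rpower p0 (- a)).
  { rewrite (Rpower_Ropp p0 a), (Rpower_Ropp (eta * Rpower 2 (- / a)) a). apply Rinv_le_contravar. apply Rpower_pos.
    apply Rle_Rpower_l. lra. lra. }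
  rewrite E in M. unfold Rdiv. assert (0 < / a) by (apply Rinv_0_lt_compat; lra). rewrite <- Rmult_assoc. apply Rmult_le_compat_r; lra.
Qed.

Lemma PhiL_small eta : 0 < eta < 1 ->
  exists d, 0 < d /\ forall p0, 0 < p0 < d -> 2 * PhiL eta <= PhiL p0.
Proof.
  intros He. exists (eta * eta). split. nra.
  intros p0 Hp0. rewrite !PhiL_eq by lra.
  assert (ln p0 <= ln (eta * eta)). { left. apply ln_increasing; lra. }
  rewrite ln_mult in H by lra. lra.
Qed.

Lemma mainQ eps q eta : 0 < eps < 1/2 -> 0 < q < 1 -> 0 < eta < pstar eps q ->
  exists k d, 0 < k /\ 0 < d /\ forall p0 th, 0 < p0 < d -> p0 < eta -> is_flow eps q th -> ptilde th 0 = p0 ->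
   (exists T, first_hit (ptilde th) eta T) /\
   forall T, first_hit (ptilde th) eta T ->
     PhiQ q p0 / (2 * eps) <= T /\ T <= PhiQ q p0 / k.
Proof.
  intros He Hq Heta. apply pack; auto. lra.
  - intros x Hx. apply PhiQ_der; lra.
  - intros x Hx. left; apply PhiQ_pos; lra.
  - apply PhiQ_small; lra.
Qed.

Lemma mainL eps eta : 0 < eps < 1/2 -> 0 < eta < pstar eps 1 ->
  exists k d, 0 < k /\ 0 < d /\ forall p0 th, 0 < p0 < d -> p0 < eta -> is_flow eps 1 th -> ptilde th 0 = p0 ->
   (exists T, first_hit (ptilde th) eta T) /\
   forall T, first_hit (ptilde th) eta T ->
     PhiL p0 / (2 * eps) <= T /\ T <= PhiL p0 / k.
Proof.
  intros He Heta. pose proof (pstar_lt1 eps 1). apply pack; auto. lra.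
  - intros x Hx. apply PhiL_der; lra.
  - intros x Hx. left; apply PhiL_pos; lra.
  - apply PhiL_small; lra.
Qed.

Lemma ratio_bounds T T' a b a' b' : 0 < a -> a <= T <= b -> 0 < a' -> a' <= T' <= b' ->
  a / b' <= T / T' /\ T / T' <= b / a'.
Proof.
  intros Ha HT Ha' HT'. split.
  - assert (E : T / T' - a / b' = (T * b' - a * T') * / (T' * b')) by (field; lra).
    assert (0 <= (T * b' - a * T') * / (T' * b')).
    { apply Rle_mult_inv_pos. nra. nra. }
    lra.
  - assert (E : b / a' - T / T' = (b * T' - T * a') * / (a' * T')) by (field; lra).
    assert (0 <= (b * T' - T * a') * / (a' * T')).
    { apply Rle_mult_inv_pos. nra. nra. }
    lra.
Qed.

Lemma grow c b M : 0 < c -> 0 < b -> exists d, 0 < d /\ forall p0, 0 < p0 < d -> M < c * Rpower p0 (- b).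
Proof.
  intros Hc Hb. set (K := Rabs M / c + 1).
  assert (HK : 0 < K). { unfold K. pose proof (Rabs_pos M). assert (0 <= Rabs M / c) by (apply Rdiv_le_0_compat; lra). lra. }
  exists (Rpower K (- / b)). split. apply Rpower_pos.
  intros p0 Hp0.
  assert (E : Rpower (Rpower K (- / b)) (- b) = K).
  { rewrite Rpower_mult. replace (- / b * - b) with 1 by (field; lra). apply Rpower_1; lra. }
  assert (Mo : Rpower (Rpower K (- / b)) (- b) <= Rpower p0 (- b)).
  { rewrite (Rpower_Ropp p0 b), (Rpower_Ropp (Rpower K (- / b)) b). apply Rinv_le_contravar. apply Rpower_pos.
    apply Rle_Rpower_l. lra. lra. }
  rewrite E in Mo.
  assert (c * K = Rabs M + c) by (unfold K; field; lra).
  pose proof (Rle_abs M). nra.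
Qed.

Lemma Rpower_split p0 u v : Rpower p0 (- (u + v)) = Rpower p0 (- u) * Rpower p0 (- v).
Proof. rewrite <- Rpower_plus. f_equal. ring. Qed.

Lemma item1 : forall eps q eta : R,
     0 < eps < 1 / 2 -> 0 < q < 1 -> 0 < eta < pstar eps q ->
     exists c1 c2 d : R, 0 < c1 /\ 0 < c2 /\ 0 < d /\
       forall (p0 : R) (th : R -> R),
         0 < p0 < d -> p0 < eta -> is_flow eps q th -> ptilde th 0 = p0 ->
         exists T : R, first_hit (ptilde th) eta T /\
           c1 * (Rpower p0 (- (1 - q)) / ((1 - q) * eps)) <= T /\
           T <= c2 * (Rpower p0 (- (1 - q)) / ((1 - q) * eps)).
Proof.
  intros eps q eta He Hq Heta. destruct (mainQ eps q eta He Hq Heta) as [k [d [Hk [Hd H]]]].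
  exists (1/2), (eps / k), d. split. lra. split. apply Rdiv_lt_0_compat; lra. split; auto.
  intros p0 th Hp0 Hpe Hf H0. destruct (H p0 th Hp0 Hpe Hf H0) as [[T HT] Hb].
  exists T. split; auto. destruct (Hb T HT) as [B1 B2]. unfold PhiQ in *.
  split.
  - replace (1 / 2 * (Rpower p0 (- (1 - q)) / ((1 - q) * eps))) with (Rpower p0 (- (1 - q)) / (1 - q) / (2 * eps)) by (field; lra). exact B1.
  - replace (eps / k * (Rpower p0 (- (1 - q)) / ((1 - q) * eps))) with (Rpower p0 (- (1 - q)) / (1 - q) / k) by (field; lra). exact B2.
Qed.

Lemma item2 : forall eps eta : R,
     0 < eps < 1 / 2 -> 0 < eta < pstar eps 1 ->
     exists c1 c2 d : R, 0 < c1 /\ 0 < c2 /\ 0 < d /\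
       forall (p0 : R) (th : R -> R),
         0 < p0 < d -> p0 < eta -> is_flow eps 1 th -> ptilde th 0 = p0 ->
         exists T : R, first_hit (ptilde th) eta T /\
           c1 * (ln (1 / p0) / eps) <= T /\ T <= c2 * (ln (1 / p0) / eps).
Proof.
  intros eps eta He Heta. destruct (mainL eps eta He Heta) as [k [d [Hk [Hd H]]]].
  exists (1/2), (eps / k), d. split. lra. split. apply Rdiv_lt_0_compat; lra. split; auto.
  intros p0 th Hp0 Hpe Hf H0. destruct (H p0 th Hp0 Hpe Hf H0) as [[T HT] Hb].
  exists T. split; auto. destruct (Hb T HT) as [B1 B2]. unfold PhiL in *.
  split.
  - replace (1 / 2 * (ln (1 / p0) / eps)) with (ln (1 / p0) / (2 * eps)) by (field; lra). exact B1.
  - replace (eps / k * (ln (1 / p0) / eps)) with (ln (1 / p0) / k) by (field; lra). exact B2.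
Qed.

Lemma item3 : forall eps q q' eta : R,
     0 < eps < 1 / 2 -> 0 < q -> q < q' -> q' < 1 ->
     0 < eta -> eta < pstar eps q -> eta < pstar eps q' ->
     exists c1 c2 d : R, 0 < c1 /\ 0 < c2 /\ 0 < d /\
       forall (p0 : R) (th th' : R -> R) (T T' : R),
         0 < p0 < d -> p0 < eta ->
         is_flow eps q th -> ptilde th 0 = p0 ->
         is_flow eps q' th' -> ptilde th' 0 = p0 ->
         first_hit (ptilde th) eta T -> first_hit (ptilde th') eta T' ->
         c1 * Rpower p0 (- (q' - q)) <= T / T' /\
         T / T' <= c2 * Rpower p0 (- (q' - q)).
Proof.
  intros eps q q' eta He Hq Hqq Hq' Heta H1 H2.
  destruct (mainQ eps q eta He ltac:(lra) ltac:(lra)) as [k [d [Hk [Hd H]]]].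
  destruct (mainQ eps q' eta He ltac:(lra) ltac:(lra)) as [k' [d' [Hk' [Hd' H']]]].
  exists (k' / (2 * eps) * ((1 - q') / (1 - q))), (2 * eps / k * ((1 - q') / (1 - q))), (Rmin d d').
  split. apply Rmult_lt_0_compat; apply Rdiv_lt_0_compat; lra.
  split. apply Rmult_lt_0_compat; apply Rdiv_lt_0_compat; lra.
  split. apply Rmin_pos; auto.
  intros p0 th th' T T' Hp0 Hpe Hf H0 Hf' H0' HT HT'.
  pose proof (Rmin_l d d'). pose proof (Rmin_r d d').
  destruct (H p0 th ltac:(lra) Hpe Hf H0) as [_ Hb].
  destruct (H' p0 th' ltac:(lra) Hpe Hf' H0') as [_ Hb'].
  destruct (Hb T HT) as [B1 B2]. destruct (Hb' T' HT') as [B1' B2'].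
  pose proof (PhiQ_pos q p0 ltac:(lra)). pose proof (PhiQ_pos q' p0 ltac:(lra)).
  destruct (ratio_bounds T T' (PhiQ q p0 / (2 * eps)) _ (PhiQ q' p0 / (2 * eps)) _ ltac:(apply Rdiv_lt_0_compat; lra) (conj B1 B2)
     ltac:(apply Rdiv_lt_0_compat; lra) (conj B1' B2')) as [R1 R2].
  unfold PhiQ in *.
  assert (Es : Rpower p0 (- (1 - q)) = Rpower p0 (- (q' - q)) * Rpower p0 (- (1 - q'))).
  { rewrite <- Rpower_split. f_equal. ring. }
  pose proof (Rpower_pos p0 (- (1 - q'))). pose proof (Rpower_pos p0 (- (q' - q))).
  rewrite Es in R1, R2. split.
  - eapply Rle_trans; [|exact R1]. right. field. repeat split; lra.
  - eapply Rle_trans; [exact R2|]. right. field. repeat split; lra.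
Qed.

Lemma item4 : forall eps q eta : R,
     0 < eps < 1 / 2 -> 0 < q < 1 ->
     0 < eta -> eta < pstar eps q -> eta < pstar eps 1 ->
     exists c1 c2 d : R, 0 < c1 /\ 0 < c2 /\ 0 < d /\
       forall (p0 : R) (th th' : R -> R) (T T' : R),
         0 < p0 < d -> p0 < eta ->
         is_flow eps q th -> ptilde th 0 = p0 ->
         is_flow eps 1 th' -> ptilde th' 0 = p0 ->
         first_hit (ptilde th) eta T -> first_hit (ptilde th') eta T' ->
         c1 * (Rpower p0 (- (1 - q)) / ln (1 / p0)) <= T / T' /\
         T / T' <= c2 * (Rpower p0 (- (1 - q)) / ln (1 / p0)).
Proof.
  intros eps q eta He Hq Heta H1 H2.
  pose proof (pstar_lt1 eps 1) as Hps.
  destruct (mainQ eps q eta He ltac:(lra) ltac:(lra)) as [k [d [Hk [Hd H]]]].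
  destruct (mainL eps eta He ltac:(lra)) as [k' [d' [Hk' [Hd' H']]]].
  exists (k' / (2 * eps) / (1 - q)), (2 * eps / k / (1 - q)), (Rmin d d').
  split. apply Rdiv_lt_0_compat; [apply Rdiv_lt_0_compat|]; lra.
  split. apply Rdiv_lt_0_compat; [apply Rdiv_lt_0_compat|]; lra.
  split. apply Rmin_pos; auto.
  intros p0 th th' T T' Hp0 Hpe Hf H0 Hf' H0' HT HT'.
  pose proof (Rmin_l d d'). pose proof (Rmin_r d d').
  destruct (H p0 th ltac:(lra) Hpe Hf H0) as [_ Hb].
  destruct (H' p0 th' ltac:(lra) Hpe Hf' H0') as [_ Hb'].
  destruct (Hb T HT) as [B1 B2]. destruct (Hb' T' HT') as [B1' B2'].
  pose proof (PhiQ_pos q p0 ltac:(lra)). pose proof (PhiL_pos p0 ltac:(lra)).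
  destruct (ratio_bounds T T' (PhiQ q p0 / (2 * eps)) _ (PhiL p0 / (2 * eps)) _ ltac:(apply Rdiv_lt_0_compat; lra) (conj B1 B2)
     ltac:(apply Rdiv_lt_0_compat; lra) (conj B1' B2')) as [R1 R2].
  unfold PhiQ, PhiL in *.
  split.
  - eapply Rle_trans; [|exact R1]. right. field. repeat split; lra.
  - eapply Rle_trans; [exact R2|]. right. field. repeat split; lra.
Qed.

Lemma ln_growth p0 a : 0 < p0 < 1 -> 0 < a -> ln (1 / p0) < (2 / a) * Rpower p0 (- (a / 2)).
Proof.
  intros Hp Ha. set (y := 1 / p0).
  assert (Hy : 0 < y) by (unfold y; apply Rdiv_lt_0_compat; lra).
  assert (E : Rpower p0 (- (a / 2)) = Rpower y (a / 2)).
  { unfold y. replace (1 / p0) with (/ p0) by (field; lra). rewrite Rpower_inv_base by lra. reflexivity. }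
  rewrite E. pose proof (exp_ineq1_le (ln (Rpower y (a / 2)))) as H.
  rewrite exp_ln in H by apply Rpower_pos. rewrite ln_Rpower in H.
  assert (ln y = (2 / a) * (a / 2 * ln y)) by (field; lra).
  assert (0 < 2 / a) by (apply Rdiv_lt_0_compat; lra).
  nra.
Qed.

Lemma item5 : forall eps q q' eta : R,
     0 < eps < 1 / 2 -> 0 < q -> q < q' -> q' <= 1 ->
     0 < eta -> eta < pstar eps q -> eta < pstar eps q' ->
     forall M : R, exists d : R, 0 < d /\
       forall (p0 : R) (th th' : R -> R) (T T' : R),
         0 < p0 < d -> p0 < eta ->
         is_flow eps q th -> ptilde th 0 = p0 ->
         is_flow eps q' th' -> ptilde th' 0 = p0 ->
         first_hit (ptilde th) eta T -> first_hit (ptilde th') eta T' ->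
         M < T / T'.
Proof.
  intros eps q q' eta He Hq Hqq Hq' Heta H1 H2 M.
  destruct Hq' as [Hlt|Heq].
  - destruct (item3 eps q q' eta He Hq Hqq Hlt Heta H1 H2) as [c1 [c2 [d [Hc1 [Hc2 [Hd H]]]]]].
    destruct (grow c1 (q' - q) M Hc1 ltac:(lra)) as [d2 [Hd2 Hg]].
    exists (Rmin d d2). split. apply Rmin_pos; auto.
    intros p0 th th' T T' Hp0 Hpe Hf H0 Hf' H0' HT HT'.
    pose proof (Rmin_l d d2). pose proof (Rmin_r d d2).
    destruct (H p0 th th' T T' ltac:(lra) Hpe Hf H0 Hf' H0' HT HT') as [R1 _].
    specialize (Hg p0 ltac:(lra)). lra.
  - subst q'.
    destruct (item4 eps q eta He ltac:(lra) Heta H1 H2) as [c1 [c2 [d [Hc1 [Hc2 [Hd H]]]]]].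
    set (a := 1 - q). assert (Ha : 0 < a) by (unfold a; lra).
    destruct (grow (c1 * (a / 2)) (a / 2) M ltac:(apply Rmult_lt_0_compat; lra) ltac:(lra)) as [d2 [Hd2 Hg]].
    pose proof (pstar_lt1 eps 1) as Hps.
    exists (Rmin d d2). split. apply Rmin_pos; auto.
    intros p0 th th' T T' Hp0 Hpe Hf H0 Hf' H0' HT HT'.
    pose proof (Rmin_l d d2). pose proof (Rmin_r d d2).
    destruct (H p0 th th' T T' ltac:(lra) Hpe Hf H0 Hf' H0' HT HT') as [R1 _].
    specialize (Hg p0 ltac:(lra)).
    pose proof (ln_growth p0 a ltac:(lra) Ha) as Hl.
    pose proof (PhiL_pos p0 ltac:(lra)) as HL. unfold PhiL in HL.
    fold a in R1.
    assert (Es : Rpower p0 (- a) = Rpower p0 (- (a / 2)) * Rpower p0 (- (a / 2))).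
    { rewrite <- Rpower_split. f_equal. field. }
    pose proof (Rpower_pos p0 (- (a / 2))) as Hr.
    assert (Key : (a / 2) * Rpower p0 (- (a / 2)) < Rpower p0 (- a) / ln (1 / p0)).
    { rewrite Es. apply (Rmult_lt_reg_r (ln (1 / p0))); auto.
      replace (Rpower p0 (- (a / 2)) * Rpower p0 (- (a / 2)) / ln (1 / p0) * ln (1 / p0))
        with (Rpower p0 (- (a / 2)) * Rpower p0 (- (a / 2))) by (field; lra).
      assert (a / 2 * ln (1 / p0) < Rpower p0 (- (a / 2))).
      { assert (a / 2 * (2 / a * Rpower p0 (- (a / 2))) = Rpower p0 (- (a / 2))) by (field; lra).
        nra. }
      nra. }
    assert (c1 * ((a / 2) * Rpower p0 (- (a / 2))) < c1 * (Rpower p0 (- a) / ln (1 / p0))) by (apply Rmult_lt_compat_l; auto).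
    lra.
Qed.

Lemma item6 : forall (eps : R) (th : R -> R),
     0 < eps < 1 / 2 -> is_flow eps 0 th ->
     0 < ptilde th 0 < 1 /\
     (forall t : R,
        is_derive (ptilde th) t
          (- (1 - 2 * eps) * pclean th t ^ 2 * ptilde th t ^ 2) /\
        - (1 - 2 * eps) * pclean th t ^ 2 * ptilde th t ^ 2 < 0) /\
     (forall s t : R, 0 <= s < t -> ptilde th t < ptilde th s) /\
     (forall eta : R, ptilde th 0 < eta -> forall t : R, 0 <= t -> ptilde th t <> eta).
Proof.
  intros eps th He Hf.
  assert (Hpos : forall t, 0 < ptilde th t < 1).
  { intros t. unfold ptilde. pose proof (sig_pos (th t)). lra. }
  assert (Hd : forall t, is_derive (ptilde th) t (- (1 - 2 * eps) * pclean th t ^ 2 * ptilde th t ^ 2)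
             /\ - (1 - 2 * eps) * pclean th t ^ 2 * ptilde th t ^ 2 < 0).
  { intros t. split.
    - pose proof (ptilde_der eps 0 th t ltac:(lra) Hf) as HH.
      apply (is_derive_eq _ _ _ _ HH). cbv zeta. pose proof (sig_pos (th t)).
      rewrite Ropp_0, !Rpower_O by lra. unfold pclean, ptilde. ring.
    - pose proof (Hpos t). unfold pclean. pose proof (sig_pos (th t)).
      assert (0 < sigmoid (th t) ^ 2 * ptilde th t ^ 2).
      { apply Rmult_lt_0_compat; apply pow_lt; lra. }
      nra. }
  assert (Hdec : forall s t, 0 <= s < t -> ptilde th t < ptilde th s).
  { intros s t Hst. destruct (mvt (ptilde th) (fun t => - (1 - 2 * eps) * pclean th t ^ 2 * ptilde th t ^ 2) s t ltac:(lra)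
       (fun u => proj1 (Hd u))) as [c [Hc Heq]].
    pose proof (proj2 (Hd c)). nra. }
  split. apply Hpos. split. exact Hd. split. exact Hdec.
  intros eta He0 t Ht. destruct (Req_dec t 0) as [->|Hn]. lra.
  specialize (Hdec 0 t ltac:(lra)). lra.
Qed.

Theorem mainTheorem10 :
  (* (i) q in (0,1): T_q = Theta( p0^{-(1-q)} / ((1-q) eps) ) as p0 -> 0 *)
  (forall eps q eta : R,
     0 < eps < 1 / 2 -> 0 < q < 1 -> 0 < eta < pstar eps q ->
     exists c1 c2 d : R, 0 < c1 /\ 0 < c2 /\ 0 < d /\
       forall (p0 : R) (th : R -> R),
         0 < p0 < d -> p0 < eta -> is_flow eps q th -> ptilde th 0 = p0 ->
         exists T : R, first_hit (ptilde th) eta T /\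
           c1 * (Rpower p0 (- (1 - q)) / ((1 - q) * eps)) <= T /\
           T <= c2 * (Rpower p0 (- (1 - q)) / ((1 - q) * eps))) /\
  (* (i) q = 1: T_1 = Theta( log(1/p0) / eps ) *)
  (forall eps eta : R,
     0 < eps < 1 / 2 -> 0 < eta < pstar eps 1 ->
     exists c1 c2 d : R, 0 < c1 /\ 0 < c2 /\ 0 < d /\
       forall (p0 : R) (th : R -> R),
         0 < p0 < d -> p0 < eta -> is_flow eps 1 th -> ptilde th 0 = p0 ->
         exists T : R, first_hit (ptilde th) eta T /\
           c1 * (ln (1 / p0) / eps) <= T /\ T <= c2 * (ln (1 / p0) / eps)) /\
  (* (i) ratio, 0 < q < q' < 1: T_q / T_q' = Theta( p0^{-(q'-q)} ) *)
  (forall eps q q' eta : R,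
     0 < eps < 1 / 2 -> 0 < q -> q < q' -> q' < 1 ->
     0 < eta -> eta < pstar eps q -> eta < pstar eps q' ->
     exists c1 c2 d : R, 0 < c1 /\ 0 < c2 /\ 0 < d /\
       forall (p0 : R) (th th' : R -> R) (T T' : R),
         0 < p0 < d -> p0 < eta ->
         is_flow eps q th -> ptilde th 0 = p0 ->
         is_flow eps q' th' -> ptilde th' 0 = p0 ->
         first_hit (ptilde th) eta T -> first_hit (ptilde th') eta T' ->
         c1 * Rpower p0 (- (q' - q)) <= T / T' /\
         T / T' <= c2 * Rpower p0 (- (q' - q))) /\
  (* (i) ratio, 0 < q < q' = 1 (corrected, see NOTES.md FIDELITY):
     T_q / T_1 = Theta( p0^{-(1-q)} / log(1/p0) ) *)
  (forall eps q eta : R,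
     0 < eps < 1 / 2 -> 0 < q < 1 ->
     0 < eta -> eta < pstar eps q -> eta < pstar eps 1 ->
     exists c1 c2 d : R, 0 < c1 /\ 0 < c2 /\ 0 < d /\
       forall (p0 : R) (th th' : R -> R) (T T' : R),
         0 < p0 < d -> p0 < eta ->
         is_flow eps q th -> ptilde th 0 = p0 ->
         is_flow eps 1 th' -> ptilde th' 0 = p0 ->
         first_hit (ptilde th) eta T -> first_hit (ptilde th') eta T' ->
         c1 * (Rpower p0 (- (1 - q)) / ln (1 / p0)) <= T / T' /\
         T / T' <= c2 * (Rpower p0 (- (1 - q)) / ln (1 / p0))) /\
  (* (i) for 0 < q < q' <= 1: T_q / T_q' -> infinity as p0 -> 0 *)
  (forall eps q q' eta : R,
     0 < eps < 1 / 2 -> 0 < q -> q < q' -> q' <= 1 ->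
     0 < eta -> eta < pstar eps q -> eta < pstar eps q' ->
     forall M : R, exists d : R, 0 < d /\
       forall (p0 : R) (th th' : R -> R) (T T' : R),
         0 < p0 < d -> p0 < eta ->
         is_flow eps q th -> ptilde th 0 = p0 ->
         is_flow eps q' th' -> ptilde th' 0 = p0 ->
         first_hit (ptilde th) eta T -> first_hit (ptilde th') eta T' ->
         M < T / T') /\
  (* (ii) q = 0: ptilde' = -(1-2 eps) p^2 ptilde^2 < 0, ptilde strictly
     decreasing, and never reaches any eta > ptilde(0) *)
  (forall (eps : R) (th : R -> R),
     0 < eps < 1 / 2 -> is_flow eps 0 th ->
     0 < ptilde th 0 < 1 /\
     (forall t : R,
        is_derive (ptilde th) t
          (- (1 - 2 * eps) * pclean th t ^ 2 * ptilde th t ^ 2) /\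
        - (1 - 2 * eps) * pclean th t ^ 2 * ptilde th t ^ 2 < 0) /\
     (forall s t : R, 0 <= s < t -> ptilde th t < ptilde th s) /\
     (forall eta : R, ptilde th 0 < eta -> forall t : R, 0 <= t -> ptilde th t <> eta)).
Proof.
  split. exact item1. split. exact item2. split. exact item3. split. exact item4.
  split. exact item5. exact item6.
Qed.
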